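(* Let $r\ge2$, $k\ge3$ and let $\widehat{F}_k$ be an $r$-coloring of $K_k$. If $G$ is an $(r,\widehat{F}_k)$-extremal graph and $u,v\in V(G)$ are non-adjacent vertices, then the graph obtained from $G$ by deleting $v$ and adding a new vertex that is a twin of $u$ (non-adjacent to $u$ and with the same neighborhood as $u$ in $G-v$) is also $(r,\widehat{F}_k)$-extremal.
   Context: An $r$-coloring of a graph assigns colors from $\{1,\dots,r\}$ to edges (not necessarily properly). A copy of $\widehat{F}_k$ in a colored graph is a set of $k$ pairwise adjacent vertices admitting a bijection to $V(K_k)$ under which two edges have equal colors iff their images have equal colors in $\widehat{F}_k$; a coloring is $\widehat{F}_k$-free if it has no copy. $c_{r,\widehat{F}_k}(G)$ is the number of $\widehat{F}_k$-free $r$-colorings of $E(G)$, $c_{r,\widehat{F}_k}(n)$ its maximum over $n$-vertex graphs, and an $n$-vertex graph $G$ is $(r,\widehat{F}_k)$-extremal if $c_{r,\widehat{F}_k}(G)=c_{r,\widehat{F}_k}(n)$. *)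

(* Defs.v *)
From mathcomp Require Import all_boot.
Set Implicit Arguments. Unset Strict Implicit. Unset Printing Implicit Defensive.

Definition simple_graph n (G : {set {set 'I_n}}) : bool :=
  [forall e in G, #|e| == 2].

Definition adj n (G : {set {set 'I_n}}) (x y : 'I_n) : bool := [set x; y] \in G.

Definition edgeT n (G : {set {set 'I_n}}) := {e : {set 'I_n} | e \in G}.

Definition coloring n (G : {set {set 'I_n}}) r := {ffun edgeT G -> 'I_r}.

Definition col n (G : {set {set 'I_n}}) r (c : coloring G r) (x y : 'I_n)
  : option 'I_r := omap c (insub [set x; y]).

(* A pattern: an r-coloring of K_k, the colour of edge {i,j} being F [set i; j]
   (values on non-2-subsets are irrelevant). *)
Definition pattern k r := {ffun {set 'I_k} -> 'I_r}.

Definition has_copy n (G : {set {set 'I_n}}) r (c : coloring G r) k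
  (F : pattern k r) : bool :=
  [exists f : {ffun 'I_k -> 'I_n},
    [&& injectiveb f,
        [forall i, forall j, (i != j) ==> adj G (f i) (f j)] &
        [forall i, forall j, forall i', forall j',
           ((i != j) && (i' != j')) ==>
           ((col c (f i) (f j) == col c (f i') (f j'))
              == (F [set i; j] == F [set i'; j']))]]].

Definition free_coloring n (G : {set {set 'I_n}}) r k (F : pattern k r)
  (c : coloring G r) : bool := ~~ has_copy c F.

Definition count_free n (G : {set {set 'I_n}}) r k (F : pattern k r) : nat :=
  #|[set c : coloring G r | free_coloring F c ]|.

Definition count_free_max n r k (F : pattern k r) : nat :=
  \max_(H : {set {set 'I_n}} | simple_graph H) count_free H F.

Definition extremal n (G : {set {set 'I_n}}) r k (F : pattern k r) : Prop :=
  simple_graph G /\ count_free G F = count_free_max n F.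

(* Delete v and add a new vertex (placed at the index v) which is a twin of u:
   adjacent exactly to the neighbours of u. *)
Definition twin_replace n (G : {set {set 'I_n}}) (u v : 'I_n) : {set {set 'I_n}} :=
  [set e in G | v \notin e] :|: [set [set v; x] | x in 'I_n & adj G u x].

(* Main.v *)
Require Import Defs.
From mathcomp Require Import all_boot.
Set Implicit Arguments. Unset Strict Implicit. Unset Printing Implicit Defensive.

Section Rep.
Variables (n r k : nat) (F : pattern k r).

Notation oF := {ffun {set 'I_n} -> option 'I_r}.

Definition copy (g : oF) (f : {ffun 'I_k -> 'I_n}) : bool :=
  [&& injectiveb f,
      [forall i, forall j, (i != j) ==> (g [set f i; f j] != None)] &
      [forall i, forall j, forall i', forall j',
         ((i != j) && (i' != j')) ==>
         ((g [set f i; f j] == g [set f i'; f j'])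
            == (F [set i; j] == F [set i'; j']))]].

Definition hc (g : oF) : bool := [exists f, copy g f].

Definition supp_is (g : oF) (G : {set {set 'I_n}}) : bool :=
  [forall e, (g e != None) == (e \in G)].

Definition toF (G : {set {set 'I_n}}) (c : coloring G r) : oF :=
  [ffun e => omap c (insub e)].

Lemma copy_ext (g g' : oF) (f f' : {ffun 'I_k -> 'I_n}) :
  injectiveb f' = injectiveb f ->
  (forall i j, i != j -> g' [set f' i; f' j] = g [set f i; f j]) ->
  copy g' f' = copy g f.
Proof.
move=> Hi Hg; rewrite /copy Hi; congr [&& _, _ & _].
  apply: eq_forallb => i; apply: eq_forallb => j.
  by case: eqP => // /eqP ij; rewrite Hg.
apply: eq_forallb => i; apply: eq_forallb => j.
apply: eq_forallb => i'; apply: eq_forallb => j'.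
by case: (i =P j) => //= /eqP ij; case: (i' =P j') => //= /eqP ij'; rewrite !Hg.
Qed.

Lemma has_copy_hc G (c : coloring G r) : has_copy c F = hc (toF c).
Proof.
apply: eq_existsb => f; rewrite /copy; congr [&& _, _ & _].
  apply: eq_forallb => i; apply: eq_forallb => j.
  rewrite /adj ffunE; case: insubP => [x -> _|/negPf ->] //=.
apply: eq_forallb => i; apply: eq_forallb => j.
apply: eq_forallb => i'; apply: eq_forallb => j'.
by rewrite /col !ffunE.
Qed.

Lemma count_free_oF G (d : 'I_r) :
  count_free G F = #|[set g : oF | supp_is g G && ~~ hc g]|.
Proof.
rewrite /count_free -(card_in_imset (f := @toF G)); last first.
  move=> c1 c2 _ _ /ffunP H; apply/ffunP => x.
  by have := H (val x); rewrite !ffunE valK /= => -[].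
apply: eq_card => g; rewrite [in RHS]inE; apply/imsetP/idP.
  case=> c; rewrite inE /free_coloring has_copy_hc => Hc ->; rewrite Hc andbT.
  apply/forallP => e; rewrite ffunE; case: insubP => [[x Hx] He <- /=|/negPf ->] //; by rewrite Hx.
case/andP => /forallP Hs Hh.
exists [ffun x : edgeT G => odflt d (g (val x))]; last first.
  apply/ffunP => e; rewrite ffunE; case: insubP => [x He <- /=|He] /=.
    rewrite ffunE; have := Hs (val x); rewrite (valP x) /=; case: (g (val x)) => //=.
  by have := Hs e; rewrite (negPf He); case: (g e).
rewrite inE /free_coloring has_copy_hc; congr (~~ hc _): Hh.
apply/ffunP => e; rewrite ffunE; case: insubP => [x He <- /=|He] /=.
    rewrite ffunE; have := Hs (val x); rewrite (valP x) /=; case: (g (val x)) => //=.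
by have := Hs e; rewrite (negPf He); case: (g e).
Qed.


Definition kill (p : pred {set 'I_n}) (g : oF) : oF :=
  [ffun e => if p e then None else g e].

Definition core (u v : 'I_n) (g : oF) : oF :=
  kill (fun e => (u \in e) || (v \in e)) g.

Definition Gm (G : {set {set 'I_n}}) (w : 'I_n) := [set e in G | w \notin e].

Definition Aset G (u v w : 'I_n) (phi : oF) :=
  [set h : oF | [&& supp_is h (Gm G w), core u v h == phi & ~~ hc h]].

Definition Xset G := [set g : oF | supp_is g G && ~~ hc g].

Definition sw (u v x : 'I_n) := if x == u then v else if x == v then u else x.

Definition swap u v (g : oF) : oF := [ffun e : {set 'I_n} => g (sw u v @^-1: e)].

Definition merge (v : 'I_n) (h1 h2 : oF) : oF := [ffun e : {set 'I_n} => if v \in e then h2 e else h1 e].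

Lemma core_sym (u v : 'I_n) : core u v =1 core v u.
Proof. by move=> g; apply/ffunP => e; rewrite !ffunE orbC. Qed.

Lemma suppE (g : oF) H e : supp_is g H -> (g e != None) = (e \in H).
Proof. by move/forallP/(_ e)/eqP. Qed.

Lemma suppN (g : oF) H e : supp_is g H -> e \notin H -> g e = None.
Proof. by move/(suppE e) => <-; case: (g e). Qed.

Lemma kill_hc p (g : oF) : hc (kill p g) -> hc g.
Proof.
case/existsP => f Hf; apply/existsP; exists f.
rewrite -(copy_ext (g := g) (g' := kill p g) (f' := f)) // => i j ij.
case/and3P: Hf => _ /forallP Ha _.
move: (Ha i) => /forallP /(_ j) /implyP /(_ ij).
by rewrite !ffunE; case: ifP.
Qed.

Lemma hc_split (u v : 'I_n) (g : oF) : u != v -> g [set u; v] = None -> hc g ->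
  hc (kill (fun e => v \in e) g) || hc (kill (fun e => u \in e) g).
Proof.
move=> uv guv /existsP [f Hf].
case/and3P: (Hf) => /injectiveP fi /forallP Ha _.
have adjf i j : i != j -> g [set f i; f j] != None.
  by move=> ij; move: (Ha i) => /forallP /(_ j) /implyP /(_ ij).
case: (boolP [exists i, f i == v]) => [/existsP [i /eqP fiv]|nv].
  apply/orP; right; apply/existsP; exists f.
  rewrite (copy_ext (g := g) (f := f)) // => a b ab; rewrite ffunE.
  case: ifP => // /set2P [] fau.
    have ai : a != i by apply: contra uv => /eqP ai; rewrite fau ai fiv.
    by move: (adjf _ _ ai); rewrite -fau fiv guv.
  have bi : b != i by apply: contra uv => /eqP bi; rewrite fau bi fiv.
  by move: (adjf _ _ bi); rewrite -fau fiv guv.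
apply/orP; left; apply/existsP; exists f.
rewrite (copy_ext (g := g) (f := f)) // => a b ab; rewrite ffunE.
case: ifP => // /set2P [] fav; case/negP: nv; apply/existsP.
  by exists a; rewrite -fav.
by exists b; rewrite -fav.
Qed.

Lemma swK (u v : 'I_n) : involutive (sw u v).
Proof.
move=> x; rewrite /sw.
case: (x =P u) => [->|/eqP xu]; first by rewrite eqxx; case: ifP => // /eqP.
case: (x =P v) => [->|/eqP xv]; first by rewrite eqxx.
by rewrite (negPf xu) (negPf xv).
Qed.

Lemma sw_pre2 (u v a b : 'I_n) : sw u v @^-1: [set a; b] = [set sw u v a; sw u v b].
Proof.
apply/setP => x; rewrite !inE.
by rewrite -{1}(swK u v a) -{1}(swK u v b) !(inj_eq (can_inj (swK u v))).
Qed.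

Lemma sw_preK (u v : 'I_n) (e : {set 'I_n}) : sw u v @^-1: (sw u v @^-1: e) = e.
Proof. by apply/setP => x; rewrite !inE swK. Qed.

Lemma swap_hc (u v : 'I_n) (g : oF) : hc (swap u v g) -> hc g.
Proof.
case/existsP => f Hf; apply/existsP; exists [ffun i => sw u v (f i)].
rewrite (copy_ext (g := swap u v g) (f := f)) //.
  apply/injectiveP/injectiveP => fi x y.
    by move=> H; apply: fi; rewrite !ffunE H.
  by rewrite !ffunE => /(can_inj (swK u v)) /fi.
by move=> i j _; rewrite !ffunE sw_pre2.
Qed.

Lemma fiber (u v : 'I_n) (S : {set oF}) :
  #|S| = \sum_(phi : oF) #|[set g in S | core u v g == phi]|.
Proof.
rewrite -sum1_card (partition_big (core u v) predT) //.
by apply: eq_bigr => phi _; rewrite sum1dep_card.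
Qed.

Section Main.
Variables (G : {set {set 'I_n}}) (u v : 'I_n).
Hypotheses (sG : simple_graph G) (uv : u != v) (nuv : ~~ adj G u v).

Lemma Gsize e : e \in G -> #|e| = 2.
Proof. by move: sG => /forallP /(_ e) /implyP H /H /eqP. Qed.

Lemma no_uv e : e \in G -> u \in e -> v \in e -> False.
Proof.
move=> eG ue ve; have : [set u; v] == e.
  rewrite eqEcard cards2 uv Gsize // andbT.
  by apply/subsetP => x; rewrite !inE => /orP [] /eqP ->.
by move/eqP => E; move: nuv; rewrite /adj E eG.
Qed.

Lemma upper :
  #|Xset G| <= \sum_(phi : oF) #|Aset G u v v phi| * #|Aset G u v u phi|.
Proof.
rewrite (fiber u v); apply: leq_sum => phi _.
rewrite -cardsX.
set f := fun g : oF => (kill (fun e => v \in e) g, kill (fun e => u \in e) g).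
rewrite -(card_in_imset (f := f)); last first.
  move=> g1 g2; rewrite !inE => /andP [/andP [s1 _] _] /andP [/andP [s2 _] _].
  case=> /ffunP H1 /ffunP H2; apply/ffunP => e.
  move: (H1 e) (H2 e); rewrite !ffunE.
  case: (boolP (v \in e)) => ve; case: (boolP (u \in e)) => ue //= _ _.
  have eG : e \notin G by apply/negP => eG; apply: (no_uv eG).
  by rewrite (suppN s1 eG) (suppN s2 eG).
apply: subset_leq_card; apply/subsetP => p /imsetP [g].
rewrite !inE => /andP [/andP [sg hg] cg] ->.
rewrite /f /=; apply/and4P; split; [apply/and3P; split | | |].
- apply/forallP => e; rewrite !inE ffunE -(suppE e sg).
  by case: (v \in e); case: (g e).
- by rewrite -(eqP cg); apply/eqP/ffunP => e; rewrite !ffunE; case: (v \in e); rewrite ?orbT.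
- by apply: contra hg; apply: kill_hc.
- apply/forallP => e; rewrite !inE ffunE -(suppE e sg).
  by case: (u \in e); case: (g e).
- by rewrite -(eqP cg); apply/eqP/ffunP => e; rewrite !ffunE; case: (u \in e); rewrite ?orbT.
- by apply: contra hg; apply: kill_hc.
Qed.

Lemma sw_u : sw u v u = v. Proof. by rewrite /sw eqxx. Qed.
Lemma sw_v : sw u v v = u. Proof. by rewrite /sw eq_sym (negPf uv) eqxx. Qed.
Lemma sw_o x : x != u -> x != v -> sw u v x = x.
Proof. by move=> xu xv; rewrite /sw (negPf xu) (negPf xv). Qed.

Lemma pre_fix (e : {set 'I_n}) : u \notin e -> v \notin e -> sw u v @^-1: e = e.
Proof.
move=> ue ve; apply/setP => x; rewrite inE.
case: (x =P u) => [->|/eqP xu]; first by rewrite sw_u (negPf ue) (negPf ve).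
case: (x =P v) => [->|/eqP xv]; first by rewrite sw_v (negPf ue) (negPf ve).
by rewrite sw_o.
Qed.

Lemma adj_neq x : adj G u x -> (x != u) && (x != v).
Proof.
move=> ux; apply/andP; split.
  by apply/negP => /eqP xu; move: (Gsize ux); rewrite xu setUid cards1.
by apply: contraNneq nuv => <-.
Qed.

Lemma twinE e : (e \in twin_replace G u v) =
  if v \in e then (sw u v @^-1: e \in G) && (u \notin e) else e \in G.
Proof.
rewrite /twin_replace !inE; case ve: (v \in e) => /=; last first.
  by rewrite andbT orb_idr // => /imsetP [x _ E]; rewrite E !inE eqxx in ve.
rewrite andbF /=; apply/imsetP/andP.
  case=> x; rewrite inE => ux ->.
  case/andP: (adj_neq ux) => xu xv.
  rewrite sw_pre2 sw_v sw_o //; split => //.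
  by rewrite !inE negb_or uv eq_sym xu.
case=> pG ue.
have upre : u \in sw u v @^-1: e by rewrite inE sw_u.
have [x Ex] : exists x, sw u v @^-1: e = [set u; x].
  move: (Gsize pG) => /eqP /cards2P [a [b [ab Eab]]].
  move: upre; rewrite Eab !inE => /orP [] /eqP ->; first by exists b.
  by exists a; rewrite setUC.
have xu : x != u.
  by apply/negP => /eqP xu; move: (Gsize pG); rewrite Ex xu setUid cards1.
have xv : x != v.
  apply: contra ue => /eqP xv.
  by rewrite -[e](sw_preK u v) Ex sw_pre2 xv sw_v !inE eqxx orbT.
exists x; last by rewrite -[e](sw_preK u v) Ex sw_pre2 sw_u sw_o.
by rewrite inE /adj -Ex.
Qed.

Lemma simple_twin : simple_graph (twin_replace G u v).
Proof.
apply/forallP => e; apply/implyP; rewrite /twin_replace !inE.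
case/orP => [/andP [eG _]|/imsetP [x]]; first by rewrite Gsize.
rewrite inE => ux ->; case/andP: (adj_neq ux) => _ xv.
by rewrite cards2; move: xv; rewrite eq_sym => ->.
Qed.

Lemma lower :
  \sum_(phi : oF) #|Aset G u v v phi| * #|Aset G u v v phi|
    <= #|Xset (twin_replace G u v)|.
Proof.
rewrite [X in _ <= X](fiber u v); apply: leq_sum => phi _.
rewrite -cardsX.
set f := fun p : oF * oF => merge v p.1 (swap u v p.2).
rewrite -(card_in_imset (f := f)); last first.
  move=> [h1 h2] [k1 k2]; rewrite !inE /=.
  case/andP => /and3P [s1 c1 _] /and3P [s2 c2 _].
  case/andP => /and3P [t1 d1 _] /and3P [t2 d2 _].
  rewrite /f /= => /ffunP H.
  have vG (e : {set 'I_n}) : v \in e -> e \notin Gm G v by move=> ve; rewrite !inE ve andbF.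
  congr pair; apply/ffunP => e.
    move: (H e); rewrite !ffunE; case: ifP => // ve _.
    by rewrite (suppN s1 (vG _ ve)) (suppN t1 (vG _ ve)).
  case ve: (v \in e); first by rewrite (suppN s2 (vG _ ve)) (suppN t2 (vG _ ve)).
  case ue: (u \in e).
    by move: (H (sw u v @^-1: e)); rewrite !ffunE inE sw_v ue sw_preK.
  have := congr1 (fun g : oF => g e) (etrans (eqP c2) (esym (eqP d2))).
  by rewrite !ffunE ue ve.
apply: subset_leq_card; apply/subsetP => g /imsetP [[h1 h2]].
rewrite !inE /= => /andP [/and3P [s1 c1 f1] /and3P [s2 c2 f2]] -> {g}.
have c12 (e : {set 'I_n}) : ~~ (u \in e) -> ~~ (v \in e) -> h1 e = h2 e.
  move=> ue ve.
  have := congr1 (fun g : oF => g e) (etrans (eqP c1) (esym (eqP c2))).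
  by rewrite !ffunE (negPf ue) (negPf ve).
rewrite /f /=; apply/andP; split; first (apply/andP; split).
- apply/forallP => e; rewrite twinE !ffunE.
  case ve: (v \in e).
    by rewrite (suppE _ s2) !inE sw_v.
  by rewrite (suppE _ s1) !inE ve andbT.
- apply: contra f1 => Hm.
  have muv : merge v h1 (swap u v h2) [set u; v] = None.
    rewrite !ffunE !inE eqxx orbT sw_pre2 sw_u sw_v.
    by rewrite (suppN s2) // !inE eqxx /= andbF.
  case/orP: (hc_split uv muv Hm) => H.
    apply: (kill_hc (p := fun e => v \in e)).
    congr (hc _): H; apply/ffunP => e; rewrite !ffunE.
    by case: (v \in e).
  case/negP: f2; apply: (kill_hc (p := fun e => v \in e)).
  apply: (swap_hc (u := u) (v := v)).
  congr (hc _): H; apply/ffunP => e; rewrite !ffunE inE sw_v.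
  case ue: (u \in e) => //; case ve: (v \in e) => //.
  by rewrite pre_fix ?ue ?ve // c12 ?ue ?ve.
- rewrite -(eqP c1); apply/eqP/ffunP => e; rewrite !ffunE.
  by case: (u \in e); case: (v \in e).
Qed.

End Main.

End Rep.

From mathcomp Require Import zify.

Lemma amgm (a b : nat) : a * b * 2 <= a * a + b * b.
Proof. by have := (nat_Cauchy a b).1; rewrite mulnC !expnS !expn0 !muln1. Qed.

Theorem corollary2p9 (r k n : nat) (F : pattern k r) (G : {set {set 'I_n}})
    (u v : 'I_n) :
  2 <= r -> 3 <= k ->
  extremal G F -> u != v -> ~~ adj G u v ->
  extremal (twin_replace G u v) F.
Proof.
move=> r2 _ [sG mG] uv nuv.
have d : 'I_r := Ordinal (leq_trans (isT : 0 < 2) r2).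
have eX (H : {set {set 'I_n}}) : count_free H F = #|Xset F H| := count_free_oF F H d.
have vu : v != u by rewrite eq_sym.
have nvu : ~~ adj G v u by rewrite /adj setUC.
have mx (H : {set {set 'I_n}}) : simple_graph H -> count_free H F <= count_free_max n F.
  move=> sH; rewrite /count_free_max; apply: (@leq_bigmax_cond _ (@simple_graph n) (fun H => count_free H F) H sH).
have s1 := simple_twin sG nuv.
have s2 := simple_twin sG nvu.
split => //.
have up := upper F sG uv nuv.
have lo1 := lower F sG uv nuv.
have lo2 := lower F sG vu nvu.
have m1 := mx _ s1; have m2 := mx _ s2.
rewrite !eX in mG m1 m2 *.
have E : \sum_(phi : {ffun {set 'I_n} -> option 'I_r})
            #|Aset F G v u u phi| * #|Aset F G v u u phi| =
         \sum_(phi : {ffun {set 'I_n} -> option 'I_r})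
            #|Aset F G u v u phi| * #|Aset F G u v u phi|.
  apply: eq_bigr => phi _.
  have -> : Aset F G v u u phi = Aset F G u v u phi.
    by apply/setP => h; rewrite !inE core_sym.
  by [].
rewrite E in lo2.
have S : (\sum_(phi : {ffun {set 'I_n} -> option 'I_r})
            #|Aset F G u v v phi| * #|Aset F G u v u phi|) * 2 <=
         \sum_(phi : {ffun {set 'I_n} -> option 'I_r})
            #|Aset F G u v v phi| * #|Aset F G u v v phi| +
         \sum_(phi : {ffun {set 'I_n} -> option 'I_r})
            #|Aset F G u v u phi| * #|Aset F G u v u phi|.
  rewrite -big_split big_distrl /=; apply: leq_sum => phi _; exact: amgm.
apply/eqP; rewrite eqn_leq m1 /=.
move: up lo1 lo2 S m2; rewrite -mG => up lo1 lo2 S m2.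
have h := leq_trans (leq_trans (leq_mul up (leqnn 2)) S) (leq_add lo1 lo2).
move: h m2; move: (#|Xset F G|) (#|Xset F (twin_replace G u v)|) (#|Xset F (twin_replace G v u)|) => a b c; lia.
Qed.
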